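(* Let $(X,d)$ be a metric space, $q_1,q_2>0$, $D>0$, and suppose that for each pair $x,y\in X$ there is a path $\eta_{xy}=\eta(x,y):[0,1]\to X$ from $x$ to $y$ satisfying (G1) $\mathrm{diam}(\eta_{xy})\le \frac{D\,d(x,y)}{2}$, (G2) $d_{\mathrm{Haus}}(\eta_{xy}([s,t]),\eta(\eta_{xy}(s),\eta_{xy}(t)))\le D$ for all $0\le s\le t\le1$, and (G3) $\eta_{xy}\subset\mathcal{N}_D(\eta_{xz}\cup\eta_{zy})$ for all $x,y,z\in X$. Let $n\in\mathbb{N}$ and let $\lambda:[0,2^n]\to X$ be a $(q_1,q_2)$-coarsely Lipschitz path. Then $$\eta(\lambda(0),\lambda(2^n))\subset \mathcal{N}_{\,nD+\frac12(q_1+q_2)D}\big(\lambda([0,2^n])\big),$$ i.e. $\eta(\lambda(0),\lambda(2^n))$ lies in the $\big(D\log_2\ell(\lambda)+\tfrac12(q_1+q_2)D\big)$-neighbourhood of $\lambda$, where $\ell(\lambda)=2^n$.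
   Context: A map $\lambda:[a,b]\to X$ is $(q_1,q_2)$-coarsely Lipschitz if $d(\lambda(s),\lambda(t))\le q_1|s-t|+q_2$ for all $s,t$. For $A\subset X$ and $r\ge0$, $\mathcal{N}_r(A)=\{p\in X: d(p,A)\le r\}$; $d_{\mathrm{Haus}}$ is Hausdorff distance; paths are identified with their images. For a path $\lambda:[0,m]\to X$, $\ell(\lambda)=m$ is its parametrisation length. *)

(* Defs.v *)
From Stdlib Require Import Reals.
Open Scope R_scope.

Definition is_metric {X : Type} (d : X -> X -> R) : Prop :=
  (forall x y, 0 <= d x y) /\
  (forall x y, d x y = 0 <-> x = y) /\
  (forall x y, d x y = d y x) /\
  (forall x y z, d x z <= d x y + d y z).

(* p ∈ N_r(A), i.e. d(p,A) = inf_{a ∈ A} d(p,a) <= r, with the infimum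
   written out. *)
Definition in_nbhd {X : Type} (d : X -> X -> R) (r : R) (A : X -> Prop) (p : X) : Prop :=
  forall eps, 0 < eps -> exists a, A a /\ d p a <= r + eps.

Definition subset {X : Type} (A B : X -> Prop) : Prop := forall p, A p -> B p.

(* d_Haus(A,B) <= r, i.e. max(sup_{a∈A} d(a,B), sup_{b∈B} d(b,A)) <= r. *)
Definition haus_le {X : Type} (d : X -> X -> R) (A B : X -> Prop) (r : R) : Prop :=
  subset A (in_nbhd d r B) /\ subset B (in_nbhd d r A).

Definition img {X : Type} (f : R -> X) (s t : R) : X -> Prop :=
  fun p => exists u, s <= u <= t /\ p = f u.

Definition diam_le {X : Type} (d : X -> X -> R) (f : R -> X) (s t r : R) : Prop :=
  forall u v, s <= u <= t -> s <= v <= t -> d (f u) (f v) <= r.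

Definition coarsely_lipschitz {X : Type} (d : X -> X -> R) (a b q1 q2 : R)
  (lam : R -> X) : Prop :=
  forall s t, a <= s <= b -> a <= t <= b -> d (lam s) (lam t) <= q1 * Rabs (s - t) + q2.

(* Main.v *)
Require Import Defs.
From Stdlib Require Import Reals Lra.
Open Scope R_scope.

Lemma nbhd_trans {X : Type} (d : X -> X -> R) r1 r2 A B p :
  is_metric d -> in_nbhd d r1 A p -> subset A (in_nbhd d r2 B) ->
  in_nbhd d (r1 + r2) B p.
Proof.
  intros [_ [_ [_ Htr]]] H1 H2 eps Heps.
  destruct (H1 (eps/2)) as [a [Ha Hpa]]; [lra|].
  destruct (H2 a Ha (eps/2)) as [b [Hb Hab]]; [lra|].
  exists b; split; [exact Hb|].
  pose proof (Htr p a b); lra.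
Qed.

Lemma key (X : Type) (d : X -> X -> R) (q1 q2 D : R)
  (eta : X -> X -> R -> X) :
  is_metric d -> 0 < D ->
  (forall x y, eta x y 0 = x /\ eta x y 1 = y) ->
  (forall x y, diam_le d (eta x y) 0 1 (D * d x y / 2)) ->
  (forall x y z, subset (img (eta x y) 0 1)
     (in_nbhd d D (fun p => img (eta x z) 0 1 p \/ img (eta z y) 0 1 p))) ->
  forall n lam,
  coarsely_lipschitz d 0 (2 ^ n) q1 q2 lam ->
  subset (img (eta (lam 0) (lam (2 ^ n))) 0 1)
         (in_nbhd d (INR n * D + (q1 + q2) * D / 2) (img lam 0 (2 ^ n))).
Proof.
  intros Hm HD Hend G1 G3.
  induction n as [|n IH]; intros lam Hl.
  - simpl in *. intros p [u [Hu ->]] eps Heps.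
    exists (lam 0). split.
    + exists 0. split; [lra|reflexivity].
    + set (x := lam 0) in *. set (y := lam 1) in *.
      assert (Hx : eta x y 0 = x) by apply Hend.
      pose proof (G1 x y u 0 Hu ltac:(lra)) as H. rewrite Hx in H.
      pose proof (Hl 0 1 ltac:(lra) ltac:(lra)) as Hxy.
      fold x y in Hxy. rewrite Rminus_0_l, Rabs_Ropp, Rabs_R1 in Hxy.
      assert (D * d x y / 2 <= D * (q1 * 1 + q2) / 2).
      { apply Rmult_le_compat_r; [lra|]. apply Rmult_le_compat_l; lra. }
      lra.
  - assert (Hp : 0 < 2 ^ n) by (apply pow_lt; lra).
    assert (E2 : 2 ^ S n = 2 ^ n + 2 ^ n) by (simpl; ring).
    assert (Hl1 : coarsely_lipschitz d 0 (2 ^ n) q1 q2 lam).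
    { intros s t Hs Ht. apply Hl; lra. }
    set (lam' := fun t => lam (t + 2 ^ n)).
    assert (Hl2 : coarsely_lipschitz d 0 (2 ^ n) q1 q2 lam').
    { intros s t Hs Ht. unfold lam'.
      replace (s - t) with ((s + 2^n) - (t + 2^n)) by ring. apply Hl; lra. }
    pose proof (IH lam Hl1) as IH1. pose proof (IH lam' Hl2) as IH2.
    unfold lam' in IH2. rewrite Rplus_0_l, <- E2 in IH2.
    intros p Hpin.
    replace (INR (S n) * D + (q1 + q2) * D / 2)
      with (D + (INR n * D + (q1 + q2) * D / 2)) by (rewrite S_INR; ring).
    apply (nbhd_trans d _ _ (fun q => img (eta (lam 0) (lam (2 ^ n))) 0 1 q \/ img (eta (lam (2 ^ n)) (lam (2 ^ S n))) 0 1 q) _ p Hm); [apply (G3 _ _ (lam (2 ^ n))); exact Hpin|].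
    intros a [Ha|Ha].
    + intros eps Heps. destruct (IH1 a Ha eps Heps) as [b [[u [Hu ->]] Hb]].
      exists (lam u). split; [exists u; split; [lra|reflexivity]|exact Hb].
    + intros eps Heps. destruct (IH2 a Ha eps Heps) as [b [[u [Hu ->]] Hb]].
      exists (lam (u + 2^n)). split; [exists (u + 2^n); split; [lra|reflexivity]|exact Hb].
Qed.

Theorem mainTheorem4 (X : Type) (d : X -> X -> R) (q1 q2 D : R)
  (eta : X -> X -> R -> X) (n : nat) (lam : R -> X) :
  is_metric d ->
  0 < q1 -> 0 < q2 -> 0 < D ->
  (* eta x y is a path [0,1] -> X from x to y *)
  (forall x y, eta x y 0 = x /\ eta x y 1 = y) ->
  (* (G1) *)
  (forall x y, diam_le d (eta x y) 0 1 (D * d x y / 2)) ->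
  (* (G2) *)
  (forall x y s t, 0 <= s -> s <= t -> t <= 1 ->
     haus_le d (img (eta x y) s t)
               (img (eta (eta x y s) (eta x y t)) 0 1) D) ->
  (* (G3) *)
  (forall x y z, subset (img (eta x y) 0 1)
     (in_nbhd d D (fun p => img (eta x z) 0 1 p \/ img (eta z y) 0 1 p))) ->
  coarsely_lipschitz d 0 (2 ^ n) q1 q2 lam ->
  subset (img (eta (lam 0) (lam (2 ^ n))) 0 1)
         (in_nbhd d (INR n * D + (q1 + q2) * D / 2) (img lam 0 (2 ^ n))).
Proof.
  intros Hm _ _ HD Hend G1 _ G3 Hl.
  exact (key X d q1 q2 D eta Hm HD Hend G1 G3 n lam Hl).
Qed.
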